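(* Let $(J,S)$ be a homogeneous $d$-dimensional multi-time Markov renewal chain with semi-Markov kernel $q$, $u=\sum_{n\ge0}q^{(n)}$, and Markov renewal function $U$. Then $U$ satisfies the multi-time Markov renewal equation $U=\mathrm{dg}(\mathbbm{1}_s)+q*U$, and consequently $U=\mathrm{dg}(\mathbbm{1}_s)*u$, i.e. $U(k_{1:d})=\sum_{l\le k_{1:d}}u(l)$.
   Context: $E=\{1,\dots,s\}$; $\mathcal{M}_s(\mathbb{N}^d)$ is the set of functions $\mathbb{N}^d\to\mathbb{R}^{s\times s}$ with convolution $[A*B](k)=\sum_{l+l'=k}A(l)B(l')$, powers $A^{(0)}=\mathbbm{I}_s$ ($I_s$ at $0_d$, zero elsewhere), $A^{(n)}=A*A^{(n-1)}$. $\mathbbm{1}$ is the real sequence identically $1$ on $\mathbb{N}^d$, and $\mathrm{dg}(\mathbbm{1}_s)$ is the matrix sequence equal to $I_s$ at every $k\in\mathbb{N}^d$ (so $[\mathrm{dg}(\mathbbm{1}_s)*A](k)=\sum_{l\le k}A(l)$). $\mathbb{N}^d$ carries the componentwise partial order $\le$, with $k<l$ meaning $k\le l$, $k\ne l$. A homogeneous $d$-dimensional multi-time Markov renewal chain is a process $(J_n,S_n)_{n\in\mathbb{N}}$, $J_n\in E$, $S_n\in\mathbb{N}^d$, $S_0=0_d$, $S_n<S_{n+1}$, with a.s. $\mathbb{P}(J_{n+1}=j,S_{n+1}-S_n=k\mid J_{0:n},S_{0:n})=q_{J_nj}(k)$, $q_{ij}(k)=\mathbb{P}(J_{n+1}=j,S_{n+1}-S_n=k\mid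 J_n=i)$ independent of $n$. $N(k)=\sup\{n:S_n\le k\}$; $\widetilde{N}_j(k)=\sum_{n=0}^{N(k)}\mathbf{1}\{J_n=j\}$; the Markov renewal function is $U_{ij}(k)=\mathbb{E}_i[\widetilde{N}_j(k)]$, where $\mathbb{E}_i$ is expectation given $J_0=i$. *)

(* Defs.v *)
From HB Require Import structures.
From mathcomp Require Import all_boot all_order all_algebra.
From mathcomp Require Import all_classical all_reals all_analysis.
Set Implicit Arguments. Unset Strict Implicit. Unset Printing Implicit Defensive.
Import Order.TTheory GRing.Theory Num.Theory.
Local Open Scope ring_scope.

Definition levec (d : nat) (k l : 'I_d -> nat) : bool := [forall i, k i <= l i]%N.
Definition ltvec (d : nat) (k l : 'I_d -> nat) : Prop := levec k l /\ k <> l.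
Definition addvec (d : nat) (k l : 'I_d -> nat) : 'I_d -> nat := fun i => (k i + l i)%N.
Definition zerovec (d : nat) : 'I_d -> nat := fun _ => 0%N.
Definition normvec (d : nat) (k : 'I_d -> nat) : nat := (\sum_(i < d) k i)%N.

Definition mseq (R : realType) (s d : nat) := ('I_d -> nat) -> 'M[R]_s.

(* convolution [A*B](k) = sum_{l + l' = k} A(l) B(l') ; l ranges over l <= k,
   encoded as finite functions with values < |k|+1 *)
Definition mconv (R : realType) (s d : nat) (A B : mseq R s d) : mseq R s d :=
  fun k => \sum_(l : {ffun 'I_d -> 'I_(normvec k).+1}
                 | levec (fun i => nat_of_ord (l i)) k)
             (A (fun i => nat_of_ord (l i)) *m B (fun i => (k i - l i)%N)).

Definition munit (R : realType) (s d : nat) : mseq R s d :=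
  fun k => if [forall i, k i == 0%N] then 1%:M else 0.

Fixpoint mpow (R : realType) (s d : nat) (A : mseq R s d) (n : nat) : mseq R s d :=
  match n with
  | 0 => @munit R s d
  | n'.+1 => @mconv R s d A (mpow A n')
  end.

Definition dg1 (R : realType) (s d : nat) : mseq R s d := fun _ => 1%:M.

Definition mrkernel_u (R : realType) (s d : nat) (q : mseq R s d) : mseq R s d :=
  fun k => \matrix_(i, j) limn (fun N => \sum_(0 <= n < N) mpow q n k i j).

(* N(k) = sup {n : S_n <= k}.  Since S_n < S_{n+1} componentwise-strictly in
   the partial order, S_n <= k forces n <= |k|, so the sup is a max over n <= |k|. *)
Definition Ncount (d : nat) (T : Type) (S : nat -> T -> 'I_d -> nat)
  (k : 'I_d -> nat) (w : T) : nat :=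
  (\max_(n < (normvec k).+1 | levec (S n w) k) n)%N.

Definition Ntilde (s d : nat) (T : Type) (J : nat -> T -> 'I_s)
  (S : nat -> T -> 'I_d -> nat) (j : 'I_s) (k : 'I_d -> nat) (w : T) : nat :=
  (\sum_(n < (Ncount S k w).+1) (J n w == j))%N.

Definition hist_event (s d : nat) (T : Type) (J : nat -> T -> 'I_s)
  (S : nat -> T -> 'I_d -> nat) (jh : nat -> 'I_s) (sh : nat -> 'I_d -> nat)
  (n : nat) : set T :=
  [set w | forall m, (m <= n)%N -> J m w = jh m /\ S m w = sh m].

Definition MRfunE (R : realType) (dT : measure_display) (T : measurableType dT)
  (s d : nat) (P : 'I_s -> probability T R) (J : nat -> T -> 'I_s)
  (S : nat -> T -> 'I_d -> nat) (i j : 'I_s) (k : 'I_d -> nat) : \bar R :=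
  (\int[P i]_w ((Ntilde J S j k w)%:R)%:E)%E.

Definition MRfun (R : realType) (dT : measure_display) (T : measurableType dT)
  (s d : nat) (P : 'I_s -> probability T R) (J : nat -> T -> 'I_s)
  (S : nat -> T -> 'I_d -> nat) : mseq R s d :=
  fun k => \matrix_(i, j) fine (MRfunE P J S i j k).

(* Main.v *)
Require Import Defs.
From HB Require Import structures.
From mathcomp Require Import all_boot all_order all_algebra.
From mathcomp Require Import all_classical all_reals all_analysis.
From mathcomp Require Import zify.
Set Implicit Arguments. Unset Strict Implicit. Unset Printing Implicit Defensive.
Import Order.TTheory GRing.Theory Num.Theory.
Local Open Scope ring_scope.
Local Open Scope classical_set_scope.

Section Comb.
Variable d : nat.

Definition ofv N (l : {ffun 'I_d -> 'I_N}) : 'I_d -> nat := fun i => nat_of_ord (l i).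
Definition conv N (l : 'I_d -> nat) : {ffun 'I_d -> 'I_N.+1} := [ffun i => inord (l i)].

Lemma levecP (k l : 'I_d -> nat) : reflect (forall i, (k i <= l i)%N) (levec k l).
Proof. exact: forallP. Qed.

Lemma ofv_conv N l : (forall i, (l i <= N)%N) -> ofv (conv N l) = l.
Proof. move=> H; apply: funext => i; rewrite /ofv /conv ffunE inordK // ltnS; exact: H. Qed.

Lemma conv_ofv N (l : {ffun 'I_d -> 'I_N.+1}) : conv N (ofv l) = l.
Proof. apply/ffunP => i; rewrite ffunE; exact: inord_val. Qed.

Lemma le_normvec (k : 'I_d -> nat) i : (k i <= normvec k)%N.
Proof. rewrite /normvec (bigD1 i) //=; exact: leq_addr. Qed.

Definition bsum (V : nmodType) N (k : 'I_d -> nat) (F : ('I_d -> nat) -> V) :=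
  \sum_(l : {ffun 'I_d -> 'I_N.+1} | levec (ofv l) k) F (ofv l).

Lemma reindex_pred (V : nmodType) (I J : finType) (P : pred I) (Q : pred J)
  (h : J -> I) (h' : I -> J) (F : I -> V) :
  (forall i, P i -> Q (h' i) /\ h (h' i) = i) ->
  (forall j, Q j -> P (h j) /\ h' (h j) = j) ->
  \sum_(i | P i) F i = \sum_(j | Q j) F (h j).
Proof.
move=> H1 H2; rewrite (reindex_onto h h'); last by move=> i /H1 [].
apply: eq_bigl => j; apply/idP/idP.
- by case/andP => /H1 [HQ _] /eqP E; rewrite -E.
- by move=> /H2 [H3 H4]; apply/andP; split => //; apply/eqP.
Qed.

Lemma bsum_bound (V : nmodType) N M k (F : ('I_d -> nat) -> V) :
  (forall i, (k i <= N)%N) -> (forall i, (k i <= M)%N) -> bsum N k F = bsum M k F.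
Proof.
move=> HN HM; rewrite /bsum (reindex_pred (h := fun l : {ffun 'I_d -> 'I_M.+1} => conv N (ofv l))
   (h' := fun l => conv M (ofv l)) (Q := fun l => levec (ofv l) k)).
- apply: eq_bigr => l /levecP Hl; rewrite ofv_conv // => i; exact: leq_trans (Hl i) (HN i).
- move=> l /levecP Hl.
  have Hl' : forall i, (ofv l i <= M)%N by move=> i; exact: leq_trans (Hl i) (HM i).
  rewrite ofv_conv //; split; first by apply/levecP.
  by rewrite conv_ofv.
- move=> l /levecP Hl.
  have Hl' : forall i, (ofv l i <= N)%N by move=> i; exact: leq_trans (Hl i) (HN i).
  rewrite ofv_conv //; split; first by apply/levecP.
  by rewrite conv_ofv.
Qed.

Definition bs (V : nmodType) k (F : ('I_d -> nat) -> V) := bsum (normvec k) k F.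

Lemma bs_boundE (V : nmodType) N k (F : ('I_d -> nat) -> V) :
  (forall i, (k i <= N)%N) -> bs k F = bsum N k F.
Proof. move=> H; apply: bsum_bound => // i; exact: le_normvec. Qed.

Lemma eq_bs (V : nmodType) k (F G : ('I_d -> nat) -> V) :
  (forall l, levec l k -> F l = G l) -> bs k F = bs k G.
Proof. by move=> H; apply: eq_bigr => l /H. Qed.

Lemma bs_single (V : nmodType) k l0 (F : ('I_d -> nat) -> V) :
  levec l0 k -> (forall l, levec l k -> l <> l0 -> F l = 0) -> bs k F = F l0.
Proof.
move=> /levecP H0 H.
have Hb : forall i, (l0 i <= normvec k)%N by move=> i; exact: leq_trans (H0 i) (le_normvec _ _).
rewrite /bs /bsum (bigD1 (conv _ l0)) /=; last by rewrite ofv_conv //; apply/levecP.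
rewrite ofv_conv // big1 ?addr0 // => l /andP [Hl Hne]; apply: H => // E.
by move/negP: Hne; apply; apply/eqP; rewrite -E conv_ofv.
Qed.

Lemma bs_reflect (V : nmodType) k (F : ('I_d -> nat) -> V) :
  bs k F = bs k (fun l => F (fun i => (k i - l i)%N)).
Proof.
set N := normvec k.
have Hb : forall l, levec l k -> forall i, (l i <= N)%N.
  by move=> l /levecP Hl i; exact: leq_trans (Hl i) (le_normvec _ _).
have Hs : forall l : {ffun 'I_d -> 'I_N.+1}, levec (fun i => (k i - ofv l i)%N) k.
  by move=> l; apply/levecP => i; exact: leq_subr.
rewrite /bs /bsum (reindex_pred (h := fun l : {ffun 'I_d -> 'I_N.+1} => conv N (fun i => (k i - ofv l i)%N))
   (h' := fun l => conv N (fun i => (k i - ofv l i)%N)) (Q := fun l => levec (ofv l) k)).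
- by apply: eq_bigr => l Hl; rewrite ofv_conv //; apply: Hb.
- move=> l Hl; rewrite ofv_conv; last by apply: Hb.
  split=> //; rewrite -[RHS]conv_ofv; congr conv; apply: funext => i.
  move/levecP: Hl => /(_ i) Hi; rewrite subKn //.
- move=> l Hl; rewrite ofv_conv; last by apply: Hb.
  split=> //; rewrite -[RHS]conv_ofv; congr conv; apply: funext => i.
  move/levecP: Hl => /(_ i) Hi; rewrite subKn //.
Qed.

Lemma bs_exchange (V : nmodType) k (G : ('I_d -> nat) -> ('I_d -> nat) -> V) :
  bs k (fun m => bs m (fun l => G l (fun i => (m i - l i)%N))) =
  bs k (fun l => bs (fun i => (k i - l i)%N) (fun m => G l m)).
Proof.
set N := normvec k.
have Hb : forall l, levec l k -> forall i, (l i <= N)%N.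
  by move=> l /levecP Hl i; exact: leq_trans (Hl i) (le_normvec _ _).
rewrite (eq_bs (G := fun m => bsum N m (fun l => G l (fun i => (m i - l i)%N)))); last first.
  move=> m Hm; apply: bs_boundE => i; exact: Hb.
rewrite [RHS](eq_bs (G := fun l => bsum N (fun i => (k i - l i)%N) (fun m => G l m))); last first.
  move=> l Hl; apply: bs_boundE => i; exact: leq_trans (leq_subr _ _) (le_normvec k i).
rewrite /bs /bsum.
rewrite (exchange_big_dep (fun l : {ffun 'I_d -> 'I_N.+1} => levec (ofv l) k)) /=; last first.
  move=> m l /levecP H1 /levecP H2; apply/levecP => i; exact: leq_trans (H2 i) (H1 i).
apply: eq_bigr => l /levecP Hl.
rewrite (reindex_pred (h := fun m : {ffun 'I_d -> 'I_N.+1} => conv N (fun i => (ofv l i + ofv m i)%N))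
   (h' := fun m => conv N (fun i => (ofv m i - ofv l i)%N))
   (Q := fun m => levec (ofv m) (fun i => (k i - ofv l i)%N))).
- apply: eq_bigr => m /levecP Hm; congr G; rewrite ofv_conv.
  + by apply: funext => i; rewrite addKn.
  + move=> i; apply: leq_trans (le_normvec k i); have := Hm i; have := Hl i; lia.
- move=> m /andP [/levecP H1 /levecP H2].
  rewrite ofv_conv; last by move=> i; apply: leq_trans (leq_subr _ _) (Hb _ (introT (levecP _ _) H1) i).
  split; first by apply/levecP => i; apply: leq_sub2r.
  rewrite -[RHS]conv_ofv; congr conv; apply: funext => i; rewrite subnKC //.
- move=> m /levecP Hm.
  have Hb2 : forall i, (ofv l i + ofv m i <= k i)%N by move=> i; have := Hm i; have := Hl i; lia.
  rewrite ofv_conv; last by move=> i; apply: leq_trans (Hb2 i) (le_normvec _ _).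
  split.
  + by apply/andP; split; apply/levecP => i //; apply: leq_addr.
  + rewrite -[RHS]conv_ofv; congr conv; apply: funext => i; rewrite addKn //.
Qed.

End Comb.

Section Conv.
Variables (R : realType) (s d : nat).
Local Notation ms := (mseq R s d).

Lemma mconvE (A B : ms) k : mconv A B k = bs k (fun l => A l *m B (fun i => (k i - l i)%N)).
Proof. by []. Qed.

Lemma allzero_eq (l : 'I_d -> nat) : [forall i, l i == 0%N] -> l = @zerovec d.
Proof. by move/forallP => H; apply: funext => i; apply/eqP; exact: H. Qed.

Lemma munit0 : @munit R s d (@zerovec d) = 1%:M.
Proof. by rewrite /munit; case: ifP => // /negP; case; apply/forallP. Qed.

Lemma munitN0 l : l <> @zerovec d -> @munit R s d l = 0.
Proof. by move=> H; rewrite /munit; case: ifP => // /allzero_eq. Qed.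

Lemma mconv1l (A : ms) k : mconv (@munit R s d) A k = A k.
Proof.
rewrite mconvE (bs_single (l0 := @zerovec d)).
- rewrite munit0 mul1mx; congr A; apply: funext => i; exact: subn0.
- by apply/levecP.
- by move=> l _ /munitN0 ->; rewrite mul0mx.
Qed.

Lemma mconv1r (A : ms) k : mconv A (@munit R s d) k = A k.
Proof.
rewrite mconvE (bs_single (l0 := k)).
- have -> : (fun i => (k i - k i)%N) = @zerovec d by apply: funext => i; rewrite subnn.
  by rewrite munit0 mulmx1.
- by apply/levecP.
- move=> l /levecP Hl Hne; rewrite munitN0 ?mulmx0 // => E; apply: Hne.
  apply: funext => i; have := Hl i; have := congr1 (fun f => f i) E; rewrite /zerovec /=; lia.
Qed.

Lemma mconvA (A B C : ms) k : mconv (mconv A B) C k = mconv A (mconv B C) k.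
Proof.
rewrite !mconvE.
transitivity (bs k (fun m => bs m (fun l =>
   (fun l m' => A l *m B m' *m C (fun i => (k i - l i - m' i)%N)) l (fun i => (m i - l i)%N)))).
  apply: eq_bs => m /levecP Hm; rewrite mconvE /bs /bsum mulmx_suml; apply: eq_bigr => l /levecP Hl.
  congr (_ *m C _); apply: funext => i; have := Hm i; have := Hl i; lia.
rewrite (bs_exchange k (fun l m' => A l *m B m' *m C (fun i => (k i - l i - m' i)%N))); apply: eq_bs => l _; rewrite mconvE /bs /bsum mulmx_sumr.
by apply: eq_bigr => m _; rewrite mulmxA.
Qed.

Lemma mpowSr (q : ms) n k : mpow q n.+1 k = mconv (mpow q n) q k.
Proof.
elim: n k => [|n IH] k.
  by rewrite /= mconv1r mconv1l.
have E : mpow q n.+1 = mconv (mpow q n) q by apply: funext => l; exact: IH.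
change (mconv q (mpow q n.+1) k = mconv (mpow q n.+1) q k).
by rewrite {1}E -mconvA.
Qed.

Lemma normvecB (k l : 'I_d -> nat) : levec l k ->
  normvec (fun i => (k i - l i)%N) = (normvec k - normvec l)%N.
Proof. by move/levecP => H; rewrite /normvec sumnB. Qed.

Lemma normvec_le (k l : 'I_d -> nat) : levec l k -> (normvec l <= normvec k)%N.
Proof. by move/levecP => H; rewrite /normvec; apply: leq_sum => i _. Qed.

Lemma normvec0 (l : 'I_d -> nat) : normvec l = 0%N -> l = @zerovec d.
Proof. by move=> H; apply: funext => i; have := le_normvec l i; rewrite H /zerovec; lia. Qed.

Lemma mpow_vanish (q : ms) : q (@zerovec d) = 0 ->
  forall n l, (normvec l < n)%N -> mpow q n l = 0.
Proof.
move=> q0; elim=> [//|n IH] l Hl.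
rewrite /= mconvE /bs /bsum big1 // => l' Hl'.
have [/normvec0 E|Hn] := eqVneq (normvec (ofv l')) 0%N.
  by rewrite E q0 mul0mx.
rewrite IH ?mulmx0 // normvecB //; have := normvec_le Hl'; lia.
Qed.

End Conv.

Section Partition.
Variables (R : realType) (dT : measure_display) (T : measurableType dT).

Lemma bigU_mem (I : eqType) (r : seq I) (Pi : pred I) (F : I -> set T) w :
  (\big[setU/set0]_(x <- r | Pi x) F x) w <-> exists x, [/\ x \in r, Pi x & F x w].
Proof.
elim: r => [|x r IH]; first by rewrite big_nil; split => // -[x []].
rewrite big_cons; case: ifP => Px; split.
- case=> [Fw|/IH [y [y1 y2 y3]]]; first by exists x; rewrite mem_head.
  by exists y; rewrite in_cons y1 orbT.
- move=> [y []]; rewrite in_cons => /orP [/eqP ->|yr] Py Fy; first by left.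
  by right; apply/IH; exists y.
- by move=> /IH [y [y1 y2 y3]]; exists y; rewrite in_cons y1 orbT.
- move=> [y []]; rewrite in_cons => /orP [/eqP ->|yr] Py Fy; first by rewrite Px in Py.
  by apply/IH; exists y.
Qed.

Lemma partition_measure (mu : probability T R) (I : finType) (Pi : pred I)
  (F : I -> set T) (A : set T) :
  (forall x, Pi x -> measurable (F x)) ->
  (forall x y w, Pi x -> Pi y -> F x w -> F y w -> x = y) ->
  (forall w, A w <-> exists2 x, Pi x & F x w) ->
  measurable A /\ mu A = (\sum_(x | Pi x) mu (F x))%E.
Proof.
move=> mF disj HA.
have -> : A = \big[setU/set0]_(x <- index_enum I | Pi x) F x.
  apply/seteqP; split => w /=.
  - by move=> /HA [x Px Fx]; apply/bigU_mem; exists x; rewrite mem_index_enum.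
  - by move=> /bigU_mem [x [_ Px Fx]]; apply/HA; exists x.
have : uniq (index_enum I) by exact: index_enum_uniq.
elim: (index_enum I) => [|x r IH]; first by rewrite !big_nil; split => //; rewrite measure0.
rewrite /= => /andP [xr ur]; have [mr Er] := IH ur.
rewrite !big_cons; case: ifP => Px //.
split; first by apply: measurableU => //; exact: mF.
rewrite measureU //; first by congr (_ + _).
- exact: mF.
- apply/seteqP; split => w //= [Fxw /bigU_mem [y [yr Py Fyw]]].
  have E := disj _ _ _ Px Py Fxw Fyw; by rewrite E yr in xr.
Qed.

Lemma pfinE (mu : probability T R) A : measurable A -> mu A = (fine (mu A))%:E.
Proof. by move=> mA; rewrite fineK //; exact: fin_num_measure. Qed.

End Partition.

Section Chain.
Variables (R : realType) (dT : measure_display) (T : measurableType dT) (s d : nat)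
  (P : 'I_s -> probability T R) (J : nat -> T -> 'I_s) (S : nat -> T -> 'I_d -> nat)
  (q : mseq R s d).
Hypothesis mJ : forall n j, measurable [set w | J n w = j].
Hypothesis mS : forall n l, measurable [set w | S n w = l].
Hypothesis S0 : forall w, S 0%N w = @zerovec d.
Hypothesis Sinc : forall n w, ltvec (S n w) (S n.+1 w).
Hypothesis PJ0 : forall i, P i [set w | J 0%N w = i] = 1%E.
Hypothesis Hq : forall i n (jh : nat -> 'I_s) (sh : nat -> 'I_d -> nat) j k,
      P i (hist_event J S jh sh n `&`
           [set w | J n.+1 w = j /\ S n.+1 w = addvec (sh n) k])
      = ((q k (jh n) j)%:E * P i (hist_event J S jh sh n))%E.

Definition Ev n j l := [set w | J n w = j /\ S n w = l].

Lemma mEv n j l : measurable (Ev n j l).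
Proof. exact: measurableI (mJ n j) (mS n l). Qed.

Lemma mhist jh sh n : measurable (hist_event J S jh sh n).
Proof.
elim: n => [|n IH].
  have -> : hist_event J S jh sh 0 = Ev 0 (jh 0%N) (sh 0%N).
    apply/seteqP; split => w /=; first by move/(_ 0%N (leqnn 0)).
    by move=> H m; rewrite leqn0 => /eqP ->.
  exact: mEv.
have -> : hist_event J S jh sh n.+1 = hist_event J S jh sh n `&` Ev n.+1 (jh n.+1) (sh n.+1).
  apply/seteqP; split => w /=.
  - by move=> H; split; [move=> m Hm; apply: H; exact: leqW | apply: H].
  - move=> [H1 H2] m; rewrite leq_eqVlt => /orP [/eqP ->|Hm] //; exact: H1.
exact: measurableI IH (mEv _ _ _).
Qed.

Lemma levec_trans (a b c : 'I_d -> nat) : levec a b -> levec b c -> levec a c.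
Proof. move=> /levecP H1 /levecP H2; apply/levecP => i; exact: leq_trans (H1 i) (H2 i). Qed.

Lemma levec_refl (a : 'I_d -> nat) : levec a a.
Proof. by apply/levecP. Qed.

Lemma S_mono w m n : (m <= n)%N -> levec (S m w) (S n w).
Proof.
elim: n => [|n IH]; first by rewrite leqn0 => /eqP ->; exact: levec_refl.
rewrite leq_eqVlt => /orP [/eqP ->|Hm]; first exact: levec_refl.
apply: levec_trans (IH Hm) _; exact: (Sinc n w).1.
Qed.

Lemma levec_anti (a b : 'I_d -> nat) : levec a b -> normvec a = normvec b -> a = b.
Proof.
move=> H E; have := normvecB H; rewrite E subnn => /normvec0 Z.
move/levecP: H => H; apply: funext => i; have := congr1 (fun f => f i) Z.
rewrite /zerovec /= => Hi; have := H i; lia.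
Qed.

Lemma S_norm w n : (n <= normvec (S n w))%N.
Proof.
elim: n => [//|n IH]; have [H1 H2] := Sinc n w.
have := normvec_le H1; rewrite leq_eqVlt => /orP [/eqP E|Hl]; last by apply: leq_ltn_trans IH Hl.
by case: H2; apply: levec_anti.
Qed.

Section Key.
Variables (i : 'I_s) (n : nat) (j' : 'I_s) (l' : 'I_d -> nat) (j : 'I_s) (k : 'I_d -> nat).
Let N := normvec l'.
Let H := {ffun 'I_n.+1 -> 'I_s * {ffun 'I_d -> 'I_N.+1}}.
Let jhof (h : H) (m : nat) := (h (inord m)).1.
Let shof (h : H) (m : nat) := ofv ((h (inord m)).2).
Let Pi (h : H) := (jhof h n == j') && (levec (shof h n) l' && levec l' (shof h n)).
Let F (h : H) := hist_event J S (jhof h) (shof h) n.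
Let F' (h : H) := F h `&` [set w | J n.+1 w = j /\ S n.+1 w = addvec (shof h n) k].

Lemma Pi_sh h : Pi h -> shof h n = l' /\ jhof h n = j'.
Proof.
rewrite /Pi => /andP [/eqP E /andP [H1 H2]]; split => //.
have a := normvec_le H1; have b := normvec_le H2.
by apply: (levec_anti H1); apply/eqP; rewrite eqn_leq a b.
Qed.

Lemma F_disj h h' w : F h w -> F h' w -> h = h'.
Proof.
move=> H1 H2; apply/ffunP => t.
have Ht : (t <= n)%N by rewrite -ltnS.
have [a1 b1] := H1 t Ht; have [a2 b2] := H2 t Ht.
have E1 : (h t).1 = (h' t).1.
  by move: a1 a2; rewrite /jhof inord_val => <- <-.
have E2 : (h t).2 = (h' t).2.
  apply/ffunP => x; apply: val_inj; move: b1 b2; rewrite /shof inord_val => b1 b2.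
  exact: (congr1 (fun f => f x) (etrans (esym b1) b2)).
by move: E1 E2; case: (h t) => a b; case: (h' t) => a' b' /= -> ->.
Qed.

Lemma F_cover w : Ev n j' l' w <-> exists2 h, Pi h & F h w.
Proof.
split.
- move=> [Jw Sw].
  pose h : H := [ffun t : 'I_n.+1 => (J t w, conv N (S t w))].
  have Hsh : forall m, (m <= n)%N -> jhof h m = J m w /\ shof h m = S m w.
    move=> m Hm; rewrite /jhof /shof /h ffunE /= inordK //; split => //.
    apply: ofv_conv => x; apply: leq_trans (le_normvec l' x).
    by rewrite -Sw; move/levecP: (S_mono w Hm); apply.
  exists h.
  + rewrite /Pi; have [-> ->] := Hsh n (leqnn n); rewrite Jw Sw eqxx levec_refl //.
  + by move=> m Hm; have [-> ->] := Hsh m Hm.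
- move=> [h /Pi_sh [E1 E2] Fw]; have [a b] := Fw n (leqnn n).
  by split; [rewrite a E2 | rewrite b E1].
Qed.

Lemma key : P i (Ev n j' l' `&` [set w | J n.+1 w = j /\ S n.+1 w = addvec l' k]) =
  ((q k j' j)%:E * P i (Ev n j' l'))%E.
Proof.
have [_ ->] := partition_measure (P i) (Pi := Pi) (F := F) (A := Ev n j' l')
  (fun h _ => mhist _ _ _) (fun h h' w _ _ => @F_disj h h' w) F_cover.
have mF' : forall h, Pi h -> measurable (F' h).
  move=> h _; rewrite /F' /F; apply: measurableI; first exact: mhist.
  exact: (measurableI _ _ (mJ _ _) (mS _ _)).
have dF' : forall h h' w, Pi h -> Pi h' -> F' h w -> F' h' w -> h = h'.
  by move=> h h' w _ _ [Fw _] [Fw' _]; exact: F_disj Fw Fw'.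
have cF' : forall w, (Ev n j' l' `&` [set w | J n.+1 w = j /\ S n.+1 w = addvec l' k]) w
   <-> exists2 h, Pi h & F' h w.
  move=> w; split.
  + move=> [/F_cover [h Ph Fw] X]; exists h => //; split => //.
    by have [-> _] := Pi_sh Ph.
  + move=> [h Ph [Fw X]]; split; first by apply/F_cover; exists h.
    by have [E _] := Pi_sh Ph; rewrite -E.
have [_ ->] := partition_measure (P i) mF' dF' cF'.
rewrite ge0_sume_distrr; last by move=> *; exact: measure_ge0.
apply: eq_bigr => h /Pi_sh [E1 E2]; rewrite /F' Hq.
by rewrite /jhof in E2; rewrite /jhof E2.
Qed.

End Key.


Definition pr i n j l := fine (P i (Ev n j l)).

Lemma q0 : q (@zerovec d) = 0.
Proof.
apply/matrixP => i j; rewrite mxE.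
have := Hq i 0 (fun _ => i) (fun _ => @zerovec d) j (@zerovec d).
have -> : hist_event J S (fun _ => i) (fun _ => @zerovec d) 0 = [set w | J 0%N w = i].
  apply/seteqP; split => w /=; first by move/(_ 0%N (leqnn 0)) => [[]].
  by move=> H m; rewrite leqn0 => /eqP ->; split => //; rewrite S0.
have -> : [set w | J 0%N w = i] `&` [set w | J 1 w = j /\ S 1 w = addvec (@zerovec d) (@zerovec d)] = set0.
  apply/seteqP; split => w //= [_ [_ E]]; have [_ H] := Sinc 0 w; apply: H.
  by rewrite E S0.
rewrite PJ0 mule1 measure0 => /esym E; exact: (EFin_inj E).
Qed.

Lemma pr_mpow i n : forall j l, pr i n j l = mpow q n l i j.
Proof.
elim: n => [|n IH] j l.
  rewrite /pr /=; case: (boolP [forall t, l t == 0%N]) => Hl.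
    have El := allzero_eq Hl; rewrite El munit0 mxE.
    have -> : Ev 0 j (@zerovec d) = [set w | J 0%N w = j].
      by apply/seteqP; split => w /= [] // ->; rewrite S0.
    have [<-|Hij] := eqVneq i j; first by rewrite PJ0.
    have mi := mJ 0 i; have mj := mJ 0 j.
    have Hd : [set w | J 0%N w = i] `&` [set w | J 0%N w = j] = set0.
      by apply/seteqP; split => w //= [-> E]; move/eqP: Hij.
    have HU : P i ([set w | J 0%N w = i] `|` [set w | J 0%N w = j]) =
       (P i [set w | J 0%N w = i] + P i [set w | J 0%N w = j])%E by exact: measureU.
    have := probability_le1 (P i) (measurableU _ _ mi mj).
    rewrite HU PJ0 (pfinE (P i) mj) -EFinD lee_fin => H.
    have H0 : (0 <= fine (P i [set w | J 0%N w = j]))%R by apply: fine_ge0; exact: measure_ge0.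
    apply/eqP; rewrite eq_le H0 andbT; rewrite -(lerD2l 1) addr0 //.
  have -> : Ev 0 j l = set0.
    apply/seteqP; split => w //= [_ E]; move/negP: Hl; apply; apply/forallP => t.
    by rewrite -E S0.
  rewrite measure0 munitN0 ?mxE //= => E; move/negP: Hl; apply; apply/forallP => t.
  by rewrite E.
set N := normvec l.
pose Pi := fun p : ('I_s * {ffun 'I_d -> 'I_N.+1})%type => true && levec (ofv p.2) l.
pose F := fun p : ('I_s * {ffun 'I_d -> 'I_N.+1})%type => Ev n p.1 (ofv p.2) `&` Ev n.+1 j l.
have mF : forall p, Pi p -> measurable (F p).
  move=> p _; exact: measurableI (mEv _ _ _) (mEv _ _ _).
have dF : forall p p' w, Pi p -> Pi p' -> F p w -> F p' w -> p = p'.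
  move=> [a b] [a' b'] w _ _ [[/= E1 E2] _] [[/= E1' E2'] _].
  have Eb : b = b' by rewrite -(conv_ofv b) -(conv_ofv b') -E2 -E2'.
  by rewrite Eb -E1 -E1'.
have cF : forall w, Ev n.+1 j l w <-> exists2 p, Pi p & F p w.
  move=> w; split; last by move=> [p _ [_ H]].
  move=> [Jw Sw].
  have Hle : levec (S n w) l by rewrite -Sw; exact: (Sinc n w).1.
  have Hb : forall t, (S n w t <= N)%N.
    by move=> t; apply: leq_trans (le_normvec l t); move/levecP: Hle; apply.
  exists (J n w, conv N (S n w)); first by rewrite /Pi /= ofv_conv.
  by split => //=; rewrite ofv_conv.
have [_ E] := partition_measure (P i) mF dF cF.
rewrite /pr E.
have E2 : forall p, Pi p -> P i (F p) = (q (fun t => (l t - ofv p.2 t)%N) p.1 j * pr i n p.1 (ofv p.2))%:E.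
  move=> p /andP [_ Hp].
  have -> : F p = Ev n p.1 (ofv p.2) `&` [set w | J n.+1 w = j /\ S n.+1 w = addvec (ofv p.2) (fun t => (l t - ofv p.2 t)%N)].
    have -> : addvec (ofv p.2) (fun t => (l t - ofv p.2 t)%N) = l.
      by apply: funext => t; rewrite /addvec subnKC //; move/levecP: Hp; apply.
    by [].
  by rewrite key (pfinE (P i) (mEv _ _ _)).
rewrite mpowSr (eq_bigr _ E2) sumEFin /= mconvE /bs /bsum summxE.
rewrite [RHS](eq_bigr (fun k => \sum_(j' < s) mpow q n (ofv k) i j' * q (fun t => (l t - ofv k t)%N) j' j)); last first.
  by move=> k _; rewrite mxE.
rewrite exchange_big /= pair_big_dep /=.
apply: eq_bigr => p _; rewrite IH mulrC //.
Qed.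


Lemma Ncount_spec w k : (Ncount S k w <= normvec k)%N /\
  forall n, (n <= normvec k)%N -> levec (S n w) k = (n <= Ncount S k w)%N.
Proof.
pose A := [pred n : 'I_(normvec k).+1 | levec (S n w) k].
have ne : (0 < #|A|)%N.
  apply/card_gt0P; exists ord0; rewrite /A inE /= S0; apply/levecP => t //.
have [i0 Hi0 E] := @eq_bigmax_cond _ A (fun n => nat_of_ord n) ne.
have EN : Ncount S k w = i0.
  rewrite /Ncount -E; apply: eq_bigl => n; by rewrite inE.
rewrite EN; split; first by rewrite -ltnS.
move=> n Hn; apply/idP/idP.
- move=> Hl; rewrite -EN /Ncount.
  exact: (@leq_bigmax_cond _ (fun m : 'I_(normvec k).+1 => levec (S m w) k)
     (fun m => nat_of_ord m) (Ordinal (n:=(normvec k).+1) (m:=n) Hn) Hl).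
- move=> Hn0; apply: levec_trans (S_mono w Hn0) _.
  by move: Hi0; rewrite inE.
Qed.

Lemma Ntilde_eq w j k : Ntilde J S j k w =
  (\sum_(n < (normvec k).+1) ((J n w == j) && levec (S n w) k))%N.
Proof.
have [H1 H2] := Ncount_spec w k.
rewrite /Ntilde (big_ord_widen (normvec k).+1 (fun n => nat_of_bool (J n w == j))) //.
rewrite big_mkcond /=; apply: eq_bigr => n _.
rewrite ltnS -H2; last by rewrite -ltnS.
by case: (levec _ _); case: (J n w == j).
Qed.

Definition Aset n j k := [set w | J n w = j /\ levec (S n w) k].

Lemma A_part i n j k : measurable (Aset n j k) /\
  P i (Aset n j k) = (bs k (fun l => pr i n j l))%:E.
Proof.
set N := normvec k.
pose Pi := fun l : {ffun 'I_d -> 'I_N.+1} => levec (ofv l) k.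
pose F := fun l : {ffun 'I_d -> 'I_N.+1} => Ev n j (ofv l).
have mF : forall l, Pi l -> measurable (F l) by move=> l _; exact: mEv.
have dF : forall l l' w, Pi l -> Pi l' -> F l w -> F l' w -> l = l'.
  move=> l l' w _ _ [_ E1] [_ E2].
  by rewrite -(conv_ofv l) -(conv_ofv l') -E1 -E2.
have cF : forall w, Aset n j k w <-> exists2 l, Pi l & F l w.
  move=> w; split; last by move=> [l Hl [E1 E2]]; split => //; rewrite E2.
  move=> [Jw Hw].
  have Hb : forall t, (S n w t <= N)%N.
    by move=> t; apply: leq_trans (le_normvec k t); move/levecP: Hw; apply.
  by exists (conv N (S n w)); rewrite /Pi /F ?ofv_conv.
have [mA E] := partition_measure (P i) mF dF cF.
split => //; rewrite E /bs /bsum -sumEFin; apply: eq_bigr => l _.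
exact: (pfinE (P i) (mEv _ _ _)).
Qed.

Lemma MRfunE_eq i j k : MRfunE P J S i j k =
  (\sum_(n < (normvec k).+1) bs k (fun l => pr i n j l))%:E.
Proof.
rewrite /MRfunE.
rewrite (eq_integral (fun w => \sum_(n < (normvec k).+1) (\1_(Aset n j k) w)%:E)); last first.
  move=> w _; rewrite Ntilde_eq natr_sum sumEFin; congr EFin; apply: eq_bigr => n _.
  rewrite indicE; congr (_%:R); congr (nat_of_bool _).
  apply/idP/idP.
  - by move=> /andP [/eqP H1 H2]; apply: mem_set.
  - by move=> /set_mem [H1 H2]; rewrite H1 eqxx H2.
rewrite ge0_integral_sum; last first.
- by move=> n w _; rewrite lee_fin indicE ler0n.
- move=> n; apply/measurable_realfun.measurable_EFinP; apply: measurable_realfun.measurable_indic.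
  by have [] := A_part i n j k.
- exact: measurableT.
- rewrite -sumEFin; apply: eq_bigr => n _.
  have [mA EA] := A_part i n j k.
  by rewrite integral_indic // setIT; exact: EA.
Qed.

Lemma MRfun_eq k : MRfun P J S k =
  \matrix_(i, j) \sum_(n < (normvec k).+1) bs k (fun l => mpow q n l i j).
Proof.
apply/matrixP => i j; rewrite !mxE MRfunE_eq /=; apply: eq_bigr => n _.
by apply: eq_bs => l _; rewrite pr_mpow.
Qed.

Lemma u_entry l M i j : (normvec l < M)%N ->
  mrkernel_u q l i j = \sum_(n < M) mpow q n l i j.
Proof.
move=> HM; rewrite /mrkernel_u mxE.
change (limn (fun N => \sum_(0 <= n < N) mpow q n l i j) = \sum_(n < M) mpow q n l i j).
apply: lim_near_cst => //; exists M => //; move=> N /= HN.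
rewrite big_mkord (big_ord_widen N (fun n => mpow q n l i j) HN) [RHS]big_mkcond /=.
apply: eq_bigr => n _; case: ifP => // Hn.
rewrite mpow_vanish ?mxE //; first exact: q0.
by apply: leq_trans HM _; rewrite leqNgt Hn.
Qed.

Lemma u_sum l M : (normvec l < M)%N ->
  mrkernel_u q l = \sum_(n < M) mpow q n l.
Proof. by move=> HM; apply/matrixP => i j; rewrite summxE (u_entry _ _ HM). Qed.

Lemma claim4 k : MRfun P J S k = bs k (mrkernel_u q).
Proof.
rewrite MRfun_eq; apply/matrixP => i j; rewrite mxE /bs /bsum summxE.
rewrite exchange_big; apply: eq_bigr => l /levecP Hl.
by rewrite (u_entry (M := (normvec k).+1)) // ltnS; apply: normvec_le; apply/levecP.
Qed.

Lemma claim3 k : MRfun P J S k = mconv (@dg1 R s d) (mrkernel_u q) k.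
Proof.
rewrite claim4 mconvE (bs_reflect k (mrkernel_u q)); apply: eq_bs => l _.
by rewrite /dg1 mul1mx.
Qed.

Lemma bs_munit k : bs k (@munit R s d) = 1%:M.
Proof.
rewrite (bs_single (l0 := @zerovec d)) ?munit0 //; first by apply/levecP.
by move=> l _ H; exact: munitN0 H.
Qed.

Lemma mconv_u m : mconv q (mrkernel_u q) m = mrkernel_u q m - @munit R s d m.
Proof.
set M := (normvec m).+1.
rewrite mconvE (eq_bs (G := fun l => \sum_(n < M) q l *m mpow q n (fun i => (m i - l i)%N))); last first.
  move=> l Hl; rewrite (u_sum (M:=M)) ?mulmx_sumr // normvecB // ltnS; exact: leq_subr.
rewrite /bs /bsum exchange_big /=.
rewrite (u_sum (M := M.+1)); last by apply: leq_trans (leqnSn M).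
rewrite [in RHS]big_ord_recl /= addrC addKr; apply: eq_bigr => n _.
by [].
Qed.

Lemma claim2 k : MRfun P J S k = @dg1 R s d k + mconv q (MRfun P J S) k.
Proof.
rewrite {1}claim4 /dg1 mconvE.
rewrite [in RHS](eq_bs (G := fun l => bs (fun i => (k i - l i)%N) (fun m => q l *m mrkernel_u q m))); last first.
  by move=> l _; rewrite claim4 /bs /bsum mulmx_sumr.
rewrite -(bs_exchange k (fun l m => q l *m mrkernel_u q m)).
rewrite [in RHS](eq_bs (G := fun m => mrkernel_u q m - @munit R s d m)); last first.
  by move=> m _; rewrite -mconv_u.
have -> : bs k (fun m => mrkernel_u q m - @munit R s d m) = bs k (mrkernel_u q) - bs k (@munit R s d).
  by rewrite /bs /bsum sumrB.
by rewrite bs_munit addrC subrK.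
Qed.

End Chain.

Unset Implicit Arguments.
Unset Strict Implicit.

Theorem proposition9 (R : realType) (dT : measure_display) (T : measurableType dT)
  (s d : nat) (P : 'I_s -> probability T R)
  (J : nat -> T -> 'I_s) (S : nat -> T -> 'I_d -> nat) (q : mseq R s d) :
  (forall n j, measurable [set w | J n w = j]) ->
  (forall n l, measurable [set w | S n w = l]) ->
  (forall w, S 0%N w = @zerovec d) ->
  (forall n w, ltvec (S n w) (S n.+1 w)) ->
  (forall i, P i [set w | J 0%N w = i] = 1%E) ->
  (forall i n (jh : nat -> 'I_s) (sh : nat -> 'I_d -> nat) j k,
      P i (hist_event J S jh sh n `&`
           [set w | J n.+1 w = j /\ S n.+1 w = addvec (sh n) k])
      = ((q k (jh n) j)%:E * P i (hist_event J S jh sh n))%E) ->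
  (forall i j k, MRfunE P J S i j k \is a fin_num) /\
  (forall k, MRfun P J S k = @dg1 R s d k + mconv q (MRfun P J S) k) /\
  (forall k, MRfun P J S k = mconv (@dg1 R s d) (mrkernel_u q) k) /\
  (forall k, MRfun P J S k =
     \sum_(l : {ffun 'I_d -> 'I_(normvec k).+1} | levec (fun i => nat_of_ord (l i)) k)
        mrkernel_u q (fun i => nat_of_ord (l i))).
Proof.
move=> mJ mS S0 Sinc PJ0 Hq.
split; [|split; [|split]].
- by move=> i j k; rewrite MRfunE_eq.
- by move=> k; apply: claim2.
- by move=> k; apply: claim3.
- by move=> k; apply: claim4.
Qed.
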